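(* Let $X$ be a set and $\tau$ a topology on $I(X)$ such that $(I(X),\tau)$ is a $T_1$ topological semigroup. Then: (i) each $v(x,y)$ ($x,y\in X$) is $\tau$-clopen, and each $w_1(y)$ and $w_2(y)$ ($y\in X$) is $\tau$-closed; (ii) if moreover $\tau$ is an inverse semigroup topology (inversion is continuous), then the inclusion relation $\{(f,g): f\subseteq g\}$ (as sets of ordered pairs) is closed in $I(X)\times I(X)$ if and only if every $w_1(x)$ is $\tau$-open; (iii) if $\tau$ is a Hausdorff topology making $I(X)$ a topological inverse semigroup, then $\tau_{pp}\subseteq\tau$.
   Context: $I(X)$ is the symmetric inverse semigroup on $X$: the set of all bijections $f:A\to B$ with $A,B\subseteq X$ (including the empty map); write $\mathrm{dom}(f)=A$, $\mathrm{im}(f)=B$. The product is composition: $\mathrm{dom}(f\circ g)=g^{-1}(\mathrm{dom}(f)\cap\mathrm{im}(g))$, $(f\circ g)(x)=f(g(x))$; inverse is $f^{-1}$. For $x,y\in X$: $v(x,y)=\{f: x\in\mathrm{dom}(f), f(x)=y\}$, $w_1(x)=\{f: x\notin\mathrm{dom}(f)\}$, $w_2(y)=\{f: y\notin\mathrm{im}(f)\}$. $\tau_{pp}$ is the topology on $I(X)$ generated by the subbasis of all sets $v(x,y)$, $w_1(x)$, $w_2(y)$. A topological semigroup has continuous multiplication; a topological inverse semigroup additionally has continuous inversion. *)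

(* Defs.v *)
From Stdlib Require Import ClassicalEpsilon.
Set Implicit Arguments.

(* Elements of I(X): partial injections X -> X, represented by their graph
   as an option-valued function (x in dom f iff f x = Some _). *)
Record pbij (X : Type) := PBij {
  pfun :> X -> option X;
  pinj : forall a a' b, pfun a = Some b -> pfun a' = Some b -> a = a' }.

Definition pcomp_fun (X : Type) (f g : pbij X) (x : X) : option X :=
  match g x with Some y => f y | None => None end.

Lemma pcomp_inj (X : Type) (f g : pbij X) :
  forall a a' b, pcomp_fun f g a = Some b -> pcomp_fun f g a' = Some b -> a = a'.
Proof.
  intros a a' b; unfold pcomp_fun.
  destruct (g a) as [y|] eqn:Ha; [|discriminate].
  destruct (g a') as [y'|] eqn:Ha'; [|discriminate].
  intros H1 H2. assert (y = y') by (eapply (pinj f); eauto). subst y'.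
  eapply (pinj g); eauto.
Qed.

Definition pcomp (X : Type) (f g : pbij X) : pbij X := @PBij X (pcomp_fun f g) (@pcomp_inj X f g).

Definition pinv_fun (X : Type) (f : pbij X) (y : X) : option X :=
  match excluded_middle_informative (exists x, f x = Some y) with
  | left H => Some (proj1_sig (constructive_indefinite_description _ H))
  | right _ => None
  end.

Lemma pinv_inj (X : Type) (f : pbij X) :
  forall a a' b, pinv_fun f a = Some b -> pinv_fun f a' = Some b -> a = a'.
Proof.
  intros a a' b; unfold pinv_fun.
  destruct (excluded_middle_informative (exists x, f x = Some a)) as [H|]; [|discriminate].
  destruct (excluded_middle_informative (exists x, f x = Some a')) as [H'|]; [|discriminate].
  destruct (constructive_indefinite_description _ H) as [x Hx].
  destruct (constructive_indefinite_description _ H') as [x' Hx'].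
  simpl. intros E1 E2. injection E1; injection E2; intros; subst.
  congruence.
Qed.

Definition pinv (X : Type) (f : pbij X) : pbij X := @PBij X (pinv_fun f) (@pinv_inj X f).

Definition v (X : Type) (x y : X) : pbij X -> Prop := fun f => f x = Some y.
Definition w1 (X : Type) (x : X) : pbij X -> Prop := fun f => f x = None.
Definition w2 (X : Type) (y : X) : pbij X -> Prop := fun f => forall a, f a <> Some y.

Definition pincl (X : Type) (f g : pbij X) : Prop :=
  forall a b, f a = Some b -> g a = Some b.

Definition is_topology (T : Type) (O : (T -> Prop) -> Prop) : Prop :=
  O (fun _ => True) /\
  (forall (F : (T -> Prop) -> Prop), (forall U, F U -> O U) ->
       O (fun t => exists U, F U /\ U t)) /\
  (forall U V, O U -> O V -> O (fun t => U t /\ V t)).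

Definition is_closed (T : Type) (O : (T -> Prop) -> Prop) (C : T -> Prop) :=
  O (fun t => ~ C t).

Definition is_clopen (T : Type) (O : (T -> Prop) -> Prop) (C : T -> Prop) :=
  O C /\ is_closed O C.

Definition T1 (T : Type) (O : (T -> Prop) -> Prop) : Prop :=
  forall a b : T, a <> b -> exists U, O U /\ U a /\ ~ U b.

Definition Hausdorff (T : Type) (O : (T -> Prop) -> Prop) : Prop :=
  forall a b : T, a <> b -> exists U V, O U /\ O V /\ U a /\ V b /\
                         (forall t, ~ (U t /\ V t)).

Definition prod_open (T : Type) (O : (T -> Prop) -> Prop) (W : T * T -> Prop) :=
  forall p, W p -> exists U V, O U /\ O V /\ U (fst p) /\ V (snd p) /\
                         (forall a b, U a -> V b -> W (a, b)).

Definition mul_continuous (X : Type) (O : (pbij X -> Prop) -> Prop) : Prop :=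
  forall f g (W : pbij X -> Prop), O W -> W (pcomp f g) ->
    exists U V, O U /\ O V /\ U f /\ V g /\
      (forall f' g', U f' -> V g' -> W (pcomp f' g')).

Definition inv_continuous (X : Type) (O : (pbij X -> Prop) -> Prop) : Prop :=
  forall W, O W -> O (fun f => W (pinv f)).

Definition generated (T : Type) (S : (T -> Prop) -> Prop) (U : T -> Prop) : Prop :=
  forall O, is_topology O -> (forall V, S V -> O V) -> O U.

Definition pp_subbasis (X : Type) (U : pbij X -> Prop) : Prop :=
  (exists x y, U = v x y) \/ (exists x, U = w1 x) \/ (exists y, U = w2 y).

Definition tau_pp (X : Type) : (pbij X -> Prop) -> Prop := generated (@pp_subbasis X).

(* Main.v *)
Require Import Defs.
From Stdlib Require Import Classical ClassicalEpsilon FunctionalExtensionality PropExtensionality ProofIrrelevance.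
Set Implicit Arguments.

Lemma pbij_ext X (f g : pbij X) : (forall a, f a = g a) -> f = g.
Proof.
  destruct f as [f pf], g as [g pg]; simpl; intros H.
  assert (f = g) by (apply functional_extensionality; auto). subst g.
  f_equal. apply proof_irrelevance.
Qed.

Definition pt X (x y : X) : pbij X.
Proof.
  refine (@PBij X (fun a => if excluded_middle_informative (a = x) then Some y else None) _).
  intros a a' b. destruct (excluded_middle_informative (a = x)), (excluded_middle_informative (a' = x));
  congruence.
Defined.

Definition zero X : pbij X.
Proof. refine (@PBij X (fun _ => None) _). intros; discriminate. Defined.

Lemma pt_eq X (x y : X) : pt x y x = Some y.
Proof. simpl. destruct (excluded_middle_informative (x = x)); congruence. Qed.
Lemma pt_neq X (x y a : X) : a <> x -> pt x y a = None.
Proof. simpl. destruct (excluded_middle_informative (a = x)); congruence. Qed.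
Lemma zero_apply X (a : X) : zero X a = None.
Proof. reflexivity. Qed.
Lemma pcomp_apply X (f g : pbij X) a :
  pcomp f g a = match g a with Some y => f y | None => None end.
Proof. reflexivity. Qed.

Lemma pinv_some X (f : pbij X) a b : pinv f b = Some a <-> f a = Some b.
Proof.
  change (pinv_fun f b = Some a <-> f a = Some b). unfold pinv_fun.
  destruct (excluded_middle_informative _) as [H|H].
  - destruct (constructive_indefinite_description _ H) as [x Hx]; simpl.
    split; intro E.
    + injection E; intro; subst; auto.
    + f_equal. eapply pinj; eauto.
  - split; intro E; [discriminate| exfalso; apply H; eauto].
Qed.

Lemma tau_ext T (O:(T->Prop)->Prop) (P Q : T -> Prop) : O P -> (forall t, P t <-> Q t) -> O Q.
Proof.
  intros HP H. replace Q with P; auto.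
  apply functional_extensionality; intro t; apply propositional_extensionality; auto.
Qed.

Lemma open_nbhd T (O:(T->Prop)->Prop) (P : T -> Prop) : is_topology O ->
  (forall t, P t -> exists U, O U /\ U t /\ (forall s, U s -> P s)) -> O P.
Proof.
  intros [_ [Hun _]] H.
  apply tau_ext with (P := fun t => exists U, (O U /\ forall s, U s -> P s) /\ U t).
  - apply Hun. intros U [? ?]; auto.
  - intro t; split.
    + intros [U [[_ HU] Ht]]; auto.
    + intro Ht. destruct (H t Ht) as [U [? [? ?]]]. exists U; auto.
Qed.

Lemma closed_pt T (O:(T->Prop)->Prop) (a:T) : is_topology O -> T1 O -> O (fun t => t <> a).
Proof.
  intros Ht HT1. apply open_nbhd; auto. intros t H.
  destruct (HT1 t a H) as [U [? [? ?]]]. exists U; split; auto; split; auto.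
  intros s Hs E; subst; contradiction.
Qed.

Definition cont X (O : (pbij X -> Prop) -> Prop) (F : pbij X -> pbij X) :=
  forall W, O W -> O (fun f => W (F f)).

Lemma right_cont X O (g : pbij X) : is_topology O -> mul_continuous O -> cont O (fun f => pcomp f g).
Proof.
  intros Ht Hm W HW. apply open_nbhd; auto. intros f Hf.
  destruct (Hm f g W HW Hf) as [U [V [HU [HV [Uf [Vg H]]]]]]. exists U. auto.
Qed.

Lemma left_cont X O (f : pbij X) : is_topology O -> mul_continuous O -> cont O (fun g => pcomp f g).
Proof.
  intros Ht Hm W HW. apply open_nbhd; auto. intros g Hg.
  destruct (Hm f g W HW Hg) as [U [V [HU [HV [Uf [Vg H]]]]]]. exists V. auto.
Qed.

Lemma comp_cont X O (F G : pbij X -> pbij X) : cont O F -> cont O G -> cont O (fun f => F (G f)).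
Proof. intros HF HG W HW. apply (HG (fun f => W (F f))). auto. Qed.

Lemma invmul_cont X O : is_topology O -> mul_continuous O -> inv_continuous O ->
  cont O (fun f : pbij X => pcomp (pinv f) f).
Proof.
  intros Ht Hm Hi W HW. apply open_nbhd; auto. intros f Hf.
  destruct (Hm (pinv f) f W HW Hf) as [U [V [HU [HV [Uf [Vg H]]]]]].
  exists (fun h => U (pinv h) /\ V h). destruct Ht as [_ [_ Hint]].
  split; [apply Hint; auto|]. split; auto. intros s [? ?]; auto.
Qed.

Lemma mulinv_cont X O : is_topology O -> mul_continuous O -> inv_continuous O ->
  cont O (fun f : pbij X => pcomp f (pinv f)).
Proof.
  intros Ht Hm Hi W HW. apply open_nbhd; auto. intros f Hf.
  destruct (Hm f (pinv f) W HW Hf) as [U [V [HU [HV [Uf [Vg H]]]]]].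
  exists (fun h => U h /\ V (pinv h)). destruct Ht as [_ [_ Hint]].
  split; [apply Hint; auto|]. split; auto. intros s [? ?]; auto.
Qed.

Lemma L1 X (f : pbij X) x y : pcomp f (pt x x) = pt x y <-> f x = Some y.
Proof.
  split.
  - intro E. assert (H := f_equal (fun h : pbij X => h x) E). cbv beta in H.
    rewrite pcomp_apply, !pt_eq in H. exact H.
  - intro H. apply pbij_ext; intro a; rewrite pcomp_apply.
    destruct (classic (a = x)).
    + subst; rewrite !pt_eq; auto.
    + rewrite !pt_neq; auto.
Qed.

Lemma L2 X (f : pbij X) x y : pcomp (pt y y) (pcomp f (pt x x)) <> zero X <-> f x = Some y.
Proof.
  split.
  - intro H. apply NNPP; intro Hn. apply H. apply pbij_ext; intro a.
    rewrite !pcomp_apply, zero_apply. destruct (classic (a = x)).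
    + subst. rewrite pt_eq. destruct (f x) as [z|] eqn:E; auto.
      rewrite pt_neq; congruence.
    + rewrite pt_neq; auto.
  - intros Hf E. assert (H := f_equal (fun h : pbij X => h x) E). cbv beta in H.
    rewrite !pcomp_apply, pt_eq, Hf, pt_eq, zero_apply in H. discriminate.
Qed.

Lemma L3 X (f : pbij X) x : f x <> None <-> pcomp f (pt x x) <> zero X.
Proof.
  split.
  - intros H E; apply H. assert (H2 := f_equal (fun h : pbij X => h x) E). cbv beta in H2.
    rewrite pcomp_apply, pt_eq, zero_apply in H2. exact H2.
  - intros H E; apply H. apply pbij_ext; intro a; rewrite pcomp_apply, zero_apply.
    destruct (classic (a = x)).
    + subst; rewrite pt_eq; auto.
    + rewrite pt_neq; auto.
Qed.

Lemma L4 X (f : pbij X) y : (exists a, f a = Some y) <-> pcomp (pt y y) f <> zero X.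
Proof.
  split.
  - intros [a Ha] E. assert (H2 := f_equal (fun h : pbij X => h a) E). cbv beta in H2.
    rewrite pcomp_apply, Ha, pt_eq, zero_apply in H2. discriminate.
  - intro H. apply NNPP; intro Hn. apply H. apply pbij_ext; intro a.
    rewrite pcomp_apply, zero_apply. destruct (f a) as [z|] eqn:E; auto.
    rewrite pt_neq; auto. intro; subst; eauto.
Qed.

Lemma L5 X (f : pbij X) x : f x <> None <-> pcomp (pt x x) (pcomp (pinv f) f) = pt x x.
Proof.
  split.
  - intro H. apply pbij_ext; intro a. rewrite !pcomp_apply.
    destruct (f a) as [z|] eqn:E.
    + assert (Hp : pinv f z = Some a) by (apply pinv_some; auto). rewrite Hp.
      destruct (classic (a = x)); [subst; rewrite pt_eq; auto | rewrite !pt_neq; auto].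
    + destruct (classic (a = x)); [subst; congruence | rewrite pt_neq; auto].
  - intros E Hn. assert (H2 := f_equal (fun h : pbij X => h x) E). cbv beta in H2.
    rewrite !pcomp_apply, Hn, pt_eq in H2. discriminate.
Qed.

Lemma L6 X (f : pbij X) y : (exists a, f a = Some y) <-> pcomp (pcomp f (pinv f)) (pt y y) = pt y y.
Proof.
  split.
  - intros [a0 Ha0]. assert (Hp : pinv f y = Some a0) by (apply pinv_some; auto).
    apply pbij_ext; intro b. rewrite !pcomp_apply.
    destruct (classic (b = y)).
    + subst. rewrite pt_eq, pcomp_apply, Hp; auto.
    + rewrite !pt_neq; auto.
  - intro E. assert (H2 := f_equal (fun h : pbij X => h y) E). cbv beta in H2.
    rewrite !pcomp_apply, pt_eq, pcomp_apply in H2.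
    destruct (pinv f y) as [a|]; eauto; discriminate.
Qed.

Theorem theorem3p3 (X : Type) (tau : (pbij X -> Prop) -> Prop) :
  is_topology tau -> T1 tau -> mul_continuous tau ->
  ( (forall x y : X, is_clopen tau (v x y)) /\
    (forall y : X, is_closed tau (w1 y) /\ is_closed tau (w2 y)) ) /\
  ( inv_continuous tau ->
    (is_closed (prod_open tau) (fun p => pincl (fst p) (snd p)) <->
     (forall x : X, tau (w1 x))) ) /\
  ( Hausdorff tau -> inv_continuous tau ->
    forall U, @tau_pp X U -> tau U ).
Proof.
  intros Ht HT1 Hm.
  assert (Hv : forall x y : X, is_clopen tau (v x y)).
  { intros x y. split.
    - eapply tau_ext.
      + apply (comp_cont (left_cont (pt y y) Ht Hm) (right_cont (pt x x) Ht Hm)).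
        apply (closed_pt (zero X) Ht HT1).
      + intro f. cbv beta. rewrite L2. unfold v. tauto.
    - unfold is_closed. eapply tau_ext.
      + apply (right_cont (pt x x) Ht Hm). apply (closed_pt (pt x y) Ht HT1).
      + intro f. cbv beta. rewrite L1. unfold v. tauto. }
  assert (Hw1open : inv_continuous tau -> forall x, tau (w1 x)).
  { intros Hi x. eapply tau_ext.
    - apply (comp_cont (left_cont (pt x x) Ht Hm) (invmul_cont Ht Hm Hi)).
      apply (closed_pt (pt x x) Ht HT1).
    - intro f. cbv beta. rewrite <- L5. unfold w1. destruct (f x); split; intro H;
      try congruence; exfalso; apply H; congruence. }
  assert (Hw2open : inv_continuous tau -> forall y, tau (w2 y)).
  { intros Hi y. eapply tau_ext.
    - apply (comp_cont (right_cont (pt y y) Ht Hm) (mulinv_cont Ht Hm Hi)).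
      apply (closed_pt (pt y y) Ht HT1).
    - intro f. cbv beta. rewrite <- L6. unfold w2. split.
      + intros H a Ha. apply H; eauto.
      + intros H [a Ha]. apply (H a); auto. }
  split; [split; [exact Hv|] | split].
  - intro y. split.
    + unfold is_closed. eapply tau_ext.
      * apply (right_cont (pt y y) Ht Hm). apply (closed_pt (zero X) Ht HT1).
      * intro f. cbv beta. rewrite <- L3. unfold w1. tauto.
    + unfold is_closed. eapply tau_ext.
      * apply (left_cont (pt y y) Ht Hm). apply (closed_pt (zero X) Ht HT1).
      * intro f. cbv beta. rewrite <- L4. unfold w2. split.
        -- intros [a Ha] H. apply (H a); auto.
        -- intro H. apply NNPP; intro Hn. apply H. intros a Ha. apply Hn; eauto.
  - intro Hi. split.
    + intros _. apply Hw1open; auto.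
    + intros _. unfold is_closed, prod_open. intros [f g] Hn. simpl in Hn.
      unfold pincl in Hn.
      destruct (not_all_ex_not _ _ Hn) as [a Ha].
      destruct (not_all_ex_not _ _ Ha) as [b Hb].
      apply imply_to_and in Hb. destruct Hb as [Hfa Hga].
      exists (v a b), (fun h => ~ v a b h).
      destruct (Hv a b) as [Ho Hc].
      split; [exact Ho|]. split; [exact Hc|]. simpl.
      split; [exact Hfa|]. split; [exact Hga|].
      intros f' g' Hf' Hg' Hincl. simpl in Hincl. apply Hg'. apply Hincl. exact Hf'.
  - intros _ Hi U HU. apply HU; [exact Ht|].
    intros V [[x [y ->]] | [[x ->] | [y ->]]].
    + apply (Hv x y).
    + apply Hw1open; auto.
    + apply Hw2open; auto.
Qed.
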